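(* Let $k\ge2$ be an integer and $\Delta=2^k$, and consider the instance $\overline{\mathcal I}$ described below. Then for every $i\in[k]$, every agent in group $G_i$ has weighted maximin share exactly $w_i$. Instance $\overline{\mathcal I}$: agents are partitioned into groups $G_1,\dots,G_k$ with $|G_i|=n_i=\Delta^{i-1}$; all agents in $G_i$ have weight $w_i$ and the same cost function $v_i$, where $w_1=1$ and $w_i=2^{i-2}/n_i$ for $i\ge2$. Items are partitioned into $\mathcal M_1,\dots,\mathcal M_k$ with $|\mathcal M_1|=m_1=1$ and $|\mathcal M_i|=m_i=\tfrac32 n_i$ for $i\ge2$; for $i\ge2$, $\mathcal M_i=\mathcal M_i^1\cup\mathcal M_i^2$ with $|\mathcal M_i^1|=n_i/2$, $|\mathcal M_i^2|=n_i$; $T_i\subseteq\mathcal M_i^1$ is any subset with $|T_i|=n_i/2-(m_1+\cdots+m_{i-1})$, $T_i'=\mathcal M_i^1\setminus T_i$, and $B_i=\mathcal M_1\cup\cdots\cup\mathcal M_{i-1}\cup T_i$. Costs: $v_1(e)=1$ for the unique $e\in\mathcal M_1$; for $1\le j<i$ (with $i\ge 2$), $v_j(e)=w_i$ for $e\in\mathcal M_i^1$ and $v_j(e)=w_i/2$ for $e\in\mathcal M_i^2$; for $i\ge2$, $v_i(e)=2w_i$ for $e\in B_i$, $v_i(e)=0$ for $e\in T_i'$, and $v_i(e)=w_i$ for $e\in\mathcal M_i^2$. All cost functions are additive.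
   Context: For a chore-allocation instance with agents $\mathcal N$, items $\mathcal M$, positive weights $w_a$ and additive costs $v_a$, an allocation is an ordered partition of $\mathcal M$ into one (possibly empty) bundle per agent, and the weighted maximin share of agent $a$ is $\mathsf{WMMS}_a=w_a\cdot\min_{\text{allocations }(B_b)_{b\in\mathcal N}}\max_{b\in\mathcal N}\frac{v_a(B_b)}{w_b}$. (Weights need not be normalized.) One checks that $m_1+\cdots+m_{i-1}\le n_i/2$ so $T_i$ is well defined. *)

(* Defs.v *)
From HB Require Import structures.
From mathcomp Require Import all_boot all_order all_algebra.
Set Implicit Arguments. Unset Strict Implicit. Unset Printing Implicit Defensive.
Import Order.TTheory GRing.Theory Num.Theory.
Local Open Scope ring_scope.

Section WMMS.
Variables (R : realFieldType) (N M : finType).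
Variables (w : N -> R) (v : N -> M -> R).

Definition bundle_cost (a : N) (f : {ffun M -> N}) (b : N) : R :=
  \sum_(e | f e == b) v a e.

(* max_b v_a(B_b)/w_b; the max over the nonempty set N is written as a fold
   whose initial value is one of the elements (b = a), hence equals the max *)
Definition alloc_val (a : N) (f : {ffun M -> N}) : R :=
  \big[Num.max/ bundle_cost a f a / w a]_(b : N) (bundle_cost a f b / w b).

(* WMMS_a = w_a * min over allocations of alloc_val; again the min is a fold
   whose initial value is attained by some allocation (everything to a) *)
Definition wmms (a : N) : R :=
  w a * \big[Num.min/ alloc_val a [ffun _ => a]]_(f : {ffun M -> N}) alloc_val a f.
End WMMS.

Definition nn (k i : nat) : nat := 2 ^ (k * i.-1).
Definition mm (k i : nat) : nat := if i == 1%N then 1%N else ((nn k i)./2 * 3)%N.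
Definition wt (R : realFieldType) (k i : nat) : R :=
  if i == 1%N then 1 else (2 ^ (i - 2))%:R / (nn k i)%:R.

(* cost to an agent of group i of an item of class ie;
   p = item lies in M_ie^1 (vs M_ie^2); inT = item lies in T_ie *)
Definition cost (R : realFieldType) (k i ie : nat) (p inT : bool) : R :=
  if (i < ie)%N then (if p then wt R k ie else wt R k ie / 2)
  else if i == 1%N then 1
  else if (ie < i)%N then 2 * wt R k i
  else if p then (if inT then 2 * wt R k i else 0) else wt R k i.

(* Main.v *)
Require Import Defs.
From HB Require Import structures.
From mathcomp Require Import all_boot all_order all_algebra.
From Stdlib Require Import IndefiniteDescription.
From mathcomp Require Import zify.
Import Order.TTheory GRing.Theory Num.Theory.

Lemma subset_card (X : finType) (A : {set X}) n : n <= #|A| ->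
  exists B : {set X}, B \subset A /\ #|B| = n.
Proof.
move=> Hn; exists [set x in take n (enum A)]; split.
  by apply/subsetP => x; rewrite inE => /mem_take; rewrite mem_enum.
rewrite cardsE; move/card_uniqP: (take_uniq n (enum_uniq (mem A))) => ->.
by rewrite size_take -cardE ltn_neqAle Hn andbT; case: eqP.
Qed.

Lemma fill0 (X Y : finType) (s : seq Y) (cnt : Y -> nat) (y0 : Y) :
  uniq s -> forall A : {set X}, \sum_(y <- s) cnt y = #|A| ->
  exists g : X -> Y, (forall x, x \in A -> g x \in s) /\
    forall y, y \in s -> #|[set x in A | g x == y]| = cnt y.
Proof.
elim: s => [|y s IH] /= Us A.
  rewrite big_nil => /esym/eqP; rewrite cards_eq0 => /eqP ->.
  by exists (fun _ => y0); split => // x; rewrite inE.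
case/andP: Us => ys Us; rewrite big_cons => HA.
have [B [BA cB]] : exists B : {set X}, B \subset A /\ #|B| = cnt y.
  by apply: subset_card; rewrite -HA leq_addr.
have [g [g1 g2]] : exists g : X -> Y, (forall x, x \in A :\: B -> g x \in s) /\
    forall y, y \in s -> #|[set x in A :\: B | g x == y]| = cnt y.
  apply: IH => //; rewrite cardsD (setIidPr BA) cB -HA.
  by rewrite addKn.
exists (fun x => if x \in B then y else g x); split.
  move=> x xA; rewrite inE; case: ifP => xB; first by rewrite eqxx.
  by rewrite g1 ?orbT // inE xB.
move=> z; rewrite inE => /orP [/eqP ->|zs].
  rewrite -cB; apply: eq_card => x; rewrite !inE.
  case: ifP => xB; first by rewrite eqxx (subsetP BA).
  case xA: (x \in A) => //=; apply/negbTE/eqP => E.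
  by move: (g1 x); rewrite inE xB xA E (negPf ys) => /(_ isT).
rewrite -(g2 z zs); apply: eq_card => x; rewrite !inE.
case: ifP => xB /=.
  case: eqP => [E|]; last by rewrite andbF.
  by rewrite E zs in ys.
by [].
Qed.

Lemma fillL (X Y : finType) (L : eqType) (lab : X -> L) (lbY : Y -> L)
  (cnt : Y -> nat) (t0 : L) (y0 : Y) :
  (forall t, t != t0 -> \sum_(y | lbY y == t) cnt y = #|[set x | lab x == t]|) ->
  exists f : X -> Y, forall y, lbY y != t0 ->
   #|[set x | (f x == y) && (lab x == lbY y)]| = cnt y /\
   (forall x, f x = y -> lab x = lbY y \/ lab x = t0).
Proof.
move=> Hb.
have Hg : forall t, exists g : X -> Y, t != t0 ->
   (forall x, lab x == t -> lbY (g x) == t) /\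
   forall y, lbY y == t -> #|[set x | (lab x == t) && (g x == y)]| = cnt y.
  move=> t; case: (eqVneq t t0) => [->|tn]; first by exists (fun _ => y0).
  have U : uniq [seq y <- enum Y | lbY y == t] by rewrite filter_uniq ?enum_uniq.
  have S : \sum_(y <- [seq y <- enum Y | lbY y == t]) cnt y = #|[set x | lab x == t]|.
    by rewrite big_filter big_enum_cond -Hb //; apply: eq_bigl => y; rewrite inE.
  have [g [g1 g2]] := @fill0 X Y _ cnt y0 U [set x | lab x == t] S.
  exists g => _; split.
    by move=> x xt; move: (g1 x); rewrite inE xt mem_filter => /(_ isT) /andP [].
  move=> y yt; rewrite -(g2 y); last by rewrite mem_filter yt mem_enum.
  by apply: eq_card => x; rewrite !inE.
have [G HG] := functional_choice _ Hg.
exists (fun x => G (lab x) x) => y yt; split.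
  have [_ H2] := HG _ yt; rewrite -(H2 y (eqxx _)).
  apply: eq_card => x; rewrite !inE andbC.
  by case: eqP => // ->.
move=> x E; case: (eqVneq (lab x) t0) => [|xn]; first by right.
left; have [H1 _] := HG _ xn; move: (H1 x (eqxx _)); rewrite E.
by move/eqP.
Qed.
Local Open Scope ring_scope.
Lemma sum_bundles (R : realFieldType) (N M : finType) (v : N -> M -> R) a
  (f : {ffun M -> N}) : \sum_b bundle_cost v a f b = \sum_e v a e.
Proof.
rewrite /bundle_cost (exchange_big_dep xpredT) //=.
by apply: eq_bigr => e _; rewrite (big_pred1 (f e)) // => b; rewrite eq_sym.
Qed.

Lemma wmms_exact (R : realFieldType) (N M : finType) (w : N -> R)
  (v : N -> M -> R) (a : N) :
  (forall b, 0 < w b) ->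
  (exists f : {ffun M -> N}, forall b, bundle_cost v a f b = w b) ->
  wmms w v a = w a.
Proof.
move=> wpos [f0 Hf0].
have val1 : alloc_val w v a f0 = 1.
  apply/eqP; rewrite eq_le; apply/andP; split.
    apply: bigmax_le => [|b _]; by rewrite Hf0 divff // gt_eqF.
  by apply: le_trans (le_bigmax _ _ a); rewrite Hf0 divff // gt_eqF.
have ge1 : forall f, 1 <= alloc_val w v a f.
  move=> f.
  have /existsP [b Hb] : [exists b, w b <= bundle_cost v a f b].
    apply: contraT => /existsPn Hn.
    have : \sum_b bundle_cost v a f b < \sum_b w b.
      apply: ltr_sum; first by apply/hasP; exists a; rewrite ?mem_index_enum.
      by move=> b _; move: (Hn b); rewrite -ltNge.
    rewrite sum_bundles -(@sum_bundles _ _ _ v a f0).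
    by rewrite (eq_bigr _ (fun b _ => Hf0 b)) ltxx.
  apply: le_trans (le_bigmax _ _ b).
  by rewrite ler_pdivlMr // mul1r.
rewrite /wmms; apply/eqP; rewrite -[X in _ == X]mulr1; apply/eqP; congr (_ * _).
apply/eqP; rewrite eq_le; apply/andP; split.
  by rewrite -val1; apply: bigmin_le.
by apply/bigmin_geP; split => // f _.
Qed.

Lemma construct (R : realFieldType) (N M : finType) (w : N -> R)
  (v : N -> M -> R) (a : N) (L : eqType) (lab : M -> L) (lbY : N -> L)
  (cnt : N -> nat) (t0 : L) (cl : L -> R) :
  (forall t, t != t0 -> \sum_(y | lbY y == t) cnt y = #|[set x | lab x == t]|) ->
  (forall b, lbY b != t0) -> (forall e, v a e = cl (lab e)) -> cl t0 = 0 ->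
  (forall b, (cnt b)%:R * cl (lbY b) = w b) ->
  exists f : {ffun M -> N}, forall b, bundle_cost v a f b = w b.
Proof.
move=> Hb Hn Hv H0 Hw.
have [f Hf] := @fillL M N L lab lbY cnt t0 a Hb.
exists [ffun e => f e] => b; have [c1 c2] := Hf b (Hn b).
rewrite /bundle_cost (bigID (fun e => lab e == lbY b)) /=.
rewrite [X in _ + X]big1 ?addr0; last first.
  move=> e /andP []; rewrite ffunE => /eqP /c2 [->|E]; first by rewrite eqxx.
  by rewrite Hv E H0.
rewrite -Hw -c1 mulr_natl -sumr_const; apply: eq_big => e.
  by rewrite ffunE inE.
by case/andP => _ /eqP <-; rewrite Hv.
Qed.
Lemma nn_half k i : (1 <= k)%N -> (2 <= i)%N ->
  nn k i = (2 * 2 ^ (k * i.-1 - 1))%N /\ (nn k i)./2 = (2 ^ (k * i.-1 - 1))%N.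
Proof.
move=> k1 i2; rewrite /nn; have [m ->] : exists m, (k * i.-1 = m.+1)%N.
  by exists (k * i.-1).-1; nia.
by rewrite expnS subSS subn0 mul2n doubleK.
Qed.

Lemma nn_pos k i : (0 < nn k i)%N.
Proof. by rewrite /nn expn_gt0. Qed.

Lemma wt_pos (R : realFieldType) k i : 0 < wt R k i.
Proof.
rewrite /wt; case: ifP => // _; apply: divr_gt0; rewrite ltr0n ?expn_gt0 ?nn_pos //.
Qed.

Lemma wt_nn (R : realFieldType) k i : (2 <= i)%N ->
  wt R k i * (nn k i)%:R = (2 ^ (i - 2))%:R.
Proof.
move=> i2; rewrite /wt; case: eqP => [E|_]; first by rewrite E in i2.
by rewrite divfK // pnatr_eq0 -lt0n nn_pos.
Qed.

Definition cc (k j i : nat) : nat :=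
  if i == 1%N then (2 ^ ((k - 1) * (j - 1)))%N else (2 ^ ((k - 1) * (j - i) - 1))%N.

Lemma W1 (R : realFieldType) k j i : (2 <= k)%N -> (1 <= i)%N -> (i < j)%N ->
  (cc k j i)%:R * (2 * wt R k j) = wt R k i.
Proof.
move=> k2 i1 ij.
have j2 : (2 <= j)%N by lia.
have nj : (nn k j)%:R != 0 :> R by rewrite pnatr_eq0 -lt0n nn_pos.
have ni : (nn k i)%:R != 0 :> R by rewrite pnatr_eq0 -lt0n nn_pos.
rewrite /wt (_ : (j == 1%N) = false); last by apply/eqP; lia.
rewrite mulrA mulrA -natrM -natrM /cc. case: eqP => [E|i1'].
  rewrite (_ : (2 ^ ((k - 1) * (j - 1)) * 2 * 2 ^ (j - 2) = nn k j)%N) ?divff //.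
  rewrite /nn -mulnA -expnS -expnD; congr (_ ^ _)%N; nia.
apply/eqP; rewrite eqr_div // -!natrM eqr_nat /nn.
rewrite [(2 ^ _ * 2)%N]mulnC -expnS -!expnD; apply/eqP; congr (_ ^ _)%N; nia.
Qed.

Lemma SumW (R : realFieldType) k j : (2 <= j)%N ->
  \sum_(1 <= i < j) (nn k i)%:R * wt R k i = (2 ^ (j - 2))%:R :> R.
Proof.
elim: j => // j IH; rewrite ltnS => j1.
case: (ltngtP j 1) => [|//|E]; first by lia.
  move=> jg; rewrite big_nat_recr /=; last by lia.
  rewrite IH // mulrC wt_nn // -natrD addnn.
  rewrite (_ : (j.+1 - 2 = (j - 2).+1)%N) ?expnS ?mul2n //; lia.
by subst j; rewrite big_nat1 /nn /wt /= muln0 expn0 mulr1.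
Qed.

Lemma sum_grp (R : realFieldType) (N : finType) (grp : N -> nat) (F : nat -> R) j :
  (forall b, (1 <= grp b)%N) ->
  \sum_(b | (grp b < j)%N) F (grp b) = \sum_(1 <= i < j) F i *+ #|[set b | grp b == i]|.
Proof.
move=> g1; elim: j => [|j IH].
  by rewrite big_geq // big_pred0 // => b.
case: (posnP j) => [->|jp].
  rewrite big_geq // big_pred0 // => b; move: (g1 b); lia.
rewrite big_nat_recr //= -IH (bigID (fun b => grp b < j)%N) /=.
congr (_ + _).
  by apply: eq_bigl => b; case: (ltnP (grp b) j) => H; rewrite /= ?andbT ?andbF //; lia.
rewrite -sumr_const; apply: eq_big => b; rewrite ?inE.
  by apply/idP/idP => [/andP []|/eqP ->]; rewrite ?ltnSn ?ltnn //; lia.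
by move=> /andP [] ? ?; congr F; lia.
Qed.

Lemma card_cls (M : finType) (cls : M -> nat) j : (forall e, (1 <= cls e)%N) ->
  #|[set e | (cls e < j)%N]| = (\sum_(1 <= i < j) #|[set e | cls e == i]|)%N.
Proof.
move=> c1; elim: j => [|j IH].
  rewrite big_geq //; apply/eqP; rewrite cards_eq0; apply/eqP/setP => e; rewrite !inE.
  by [].
case: (posnP j) => [->|jp].
  rewrite big_geq //; apply/eqP; rewrite cards_eq0; apply/eqP/setP => e; rewrite !inE.
  move: (c1 e); lia.
rewrite big_nat_recr //= -IH.
rewrite (_ : [set e | (cls e < j.+1)%N] = [set e | (cls e < j)%N] :|: [set e | cls e == j]).
  rewrite cardsU (_ : _ :&: _ = set0) ?cards0 ?subn0 //.
  by apply/setP => e; rewrite !inE; apply/negbTE; apply/negP => /andP [] ? /eqP; lia.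
by apply/setP => e; rewrite !inE ltnS leq_eqVlt orbC.
Qed.

Lemma Sbound k j : (2 <= k)%N -> (2 <= j)%N ->
  (\sum_(1 <= i < j) mm k i < (nn k j)./2)%N.
Proof.
move=> k2; elim: j => // j IH; rewrite ltnS => j1.
case: (ltngtP j 1) => [|//|E]; first by lia.
  move=> jg; rewrite big_nat_recr /=; last by lia.
  have := IH jg; rewrite /mm (_ : (j == 1%N) = false); last by apply/eqP; lia.
  have [_ ->] := @nn_half k j (ltnW k2) jg.
  have [_ ->] := @nn_half k j.+1 (ltnW k2) (ltnW jg).
  rewrite (_ : (k * j.+1.-1 - 1 = (k * j.-1 - 1) + k)%N); last by nia.
  rewrite expnD; have : (2 ^ 2 <= 2 ^ k)%N by rewrite leq_exp2l.
  move: (2 ^ k)%N (2 ^ (k * j.-1 - 1))%N => Y X; nia.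
subst j; rewrite big_nat1 /mm /=; have [_ ->] := @nn_half k 2 (ltnW k2) (leqnn _).
rewrite muln1 -{1}(expn0 2) ltn_exp2l //; lia.
Qed.
Theorem mainTheorem10 (R : realFieldType) (k : nat) (N M : finType)
    (grp : N -> nat) (cls : M -> nat) (part1 : M -> bool) (T : {set M}) :
  (2 <= k)%N ->
  (forall a, (1 <= grp a <= k)%N) ->
  (forall i, (1 <= i <= k)%N -> #|[set a | grp a == i]| = nn k i) ->
  (forall e, (1 <= cls e <= k)%N) ->
  #|[set e | cls e == 1%N]| = 1%N ->
  (forall i, (2 <= i <= k)%N ->
     #|[set e | (cls e == i) && part1 e]| = (nn k i)./2) ->
  (forall i, (2 <= i <= k)%N ->
     #|[set e | (cls e == i) && ~~ part1 e]| = nn k i) ->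
  T \subset [set e | (2 <= cls e)%N && part1 e] ->
  (forall i, (2 <= i <= k)%N ->
     #|[set e in T | cls e == i]| = ((nn k i)./2 - \sum_(1 <= j < i) mm k j)%N) ->
  forall a : N,
    wmms (fun b => wt R k (grp b))
         (fun b e => cost R k (grp b) (cls e) (part1 e) (e \in T)) a
    = wt R k (grp a).
Proof.
move=> k2 gk Gc ck C1 Cp1 Cp2 Tsub Tc a.
set j := grp a.
have jk : (1 <= j <= k)%N by apply: gk.
have g1 : forall b, (1 <= grp b)%N by move=> b; case/andP: (gk b).
have c1 : forall e, (1 <= cls e)%N by move=> e; case/andP: (ck e).
have HS : forall i, exists S : {set N}, (2 <= i <= k)%N ->
    S \subset [set b | grp b == i] /\ #|S| = (nn k i)./2.
  move=> i; case: (boolP (2 <= i <= k)%N) => Hi; last by exists set0.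
  have Hle : ((nn k i)./2 <= #|[set b | grp b == i]|)%N.
    rewrite Gc; last by lia.
    by rewrite -{2}(odd_double_half (nn k i)) -addnn addnA leq_addl.
  have [S [S1 S2]] := @subset_card N [set b | grp b == i] (nn k i)./2 Hle.
  by exists S.
have [Sf HSf] := functional_choice _ HS.
pose H b := b \in Sf (grp b).
pose lab e := let ie := cls e in
  if (j < ie)%N then (ie, if part1 e then 0 else 1)%N
  else if j == 1%N then (1, 0)%N
  else if (ie < j)%N || (part1 e && (e \in T)) then (j, 0)%N
  else if part1 e then (0, 0)%N else (j, 1)%N.
pose lbY b := let i := grp b in
  if (j < i)%N then (i, if H b then 0 else 1)%N
  else if j == 1%N then (1, 0)%N
  else if (i < j)%N then (j, 0)%N else (j, 1)%N.
pose cnt b := let i := grp b in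
  if (j < i)%N then (if H b then 1 else 2)%N
  else if i == j then 1%N else cc k j i.
pose cl (t : nat * nat) : R :=
  if t.1 == 0%N then 0 else if (j < t.1)%N then
    (if t.2 == 0%N then wt R k t.1 else wt R k t.1 / 2)
  else if j == 1%N then 1 else if t.2 == 0%N then 2 * wt R k j else wt R k j.
apply: wmms_exact; first by move=> b; apply: wt_pos.
apply: (@construct R N M _ _ a _ lab lbY cnt (0, 0)%N cl).
- move=> t tn.
  case Ex: ([exists b, lbY b == t] || [exists e, lab e == t]); last first.
    move/negbT: Ex; rewrite negb_or => /andP [/existsPn nb /existsPn ne].
    rewrite big_pred0; last by move=> b; apply/negbTE/nb.
    apply/esym/eqP; rewrite cards_eq0; apply/eqP/setP => e; rewrite !inE.
    exact/negbTE/ne.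
  have FORM : (exists2 i, (j < i <= k)%N & (t = (i, 0)%N \/ t = (i, 1)%N)) \/
      (j = 1%N /\ t = (1, 0)%N) \/ (j != 1%N /\ (t = (j, 0)%N \/ t = (j, 1)%N)).
    case/orP: Ex => [/existsP [b /eqP <-] | /existsP [e /eqP Ee]].
      rewrite /lbY; have := gk b; case: (ltnP j (grp b)) => h gb.
        by left; exists (grp b); [lia | case: (H b); auto].
      case: (eqVneq j 1%N) => J1; first by right; left.
      by right; right; split => //; case: ltnP; auto.
    move: Ee tn; rewrite /lab; have := ck e; case: (ltnP j (cls e)) => h ce.
      by move=> <- _; left; exists (cls e); [lia | case: (part1 e); auto].
    case: (eqVneq j 1%N) => J1; first by move=> <-; right; left.
    move=> <-; case: ifP => _; first by right; right; auto.
    by case: ifP => _; [rewrite eqxx | right; right; auto].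
  have memS : forall i b, (2 <= i <= k)%N -> b \in Sf i -> grp b = i.
    move=> i b Hi bS; have [S1 _] := HSf i Hi.
    by move: (subsetP S1 b bS); rewrite inE => /eqP.
  case: FORM => [[i Hi [-> | ->]] | [[J1 ->] | [J1 [-> | ->]]]].
  + have Hi2 : (2 <= i <= k)%N by lia.
    have [_ Sc] := HSf i Hi2.
    rewrite (_ : [set e | lab e == (i, 0%N)] = [set e | (cls e == i) && part1 e]); last first.
      apply/setP => e; rewrite !inE /lab; case: (ltnP j (cls e)) => h.
        by case: (part1 e); rewrite xpair_eqE ?andbT ?andbF.
      rewrite (_ : (cls e == i) = false) /=; last by apply/eqP; lia.
      by repeat case: ifP => _; rewrite xpair_eqE; apply/negbTE/negP => /andP [/eqP ? _]; lia.
    have PE : forall b, (lbY b == (i, 0%N)) = (b \in Sf i).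
      move=> b; rewrite /lbY /H; case: (ltnP j (grp b)) => h.
        case: (boolP (b \in Sf (grp b))) => hb; rewrite xpair_eqE ?andbT ?andbF /=.
          by apply/eqP/idP => [<- //|/(memS _ _ Hi2)].
        by apply/esym/negbTE/negP => bS; move: hb; rewrite (memS _ _ Hi2 bS) bS.
      rewrite (_ : (b \in Sf i) = false); last first.
        by apply/negbTE/negP => bS; move: (memS _ _ Hi2 bS); lia.
      by repeat case: ifP => _; rewrite xpair_eqE; apply/negbTE/negP => /andP [/eqP ? _]; lia.
    rewrite Cp1 // -Sc -sum1_card (eq_bigl _ _ PE); apply: eq_bigr => b bS.
    rewrite /cnt /H (memS _ _ Hi2 bS) bS.
    by rewrite (_ : (j < i)%N = true) //; lia.
  + have Hi2 : (2 <= i <= k)%N by lia.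
    have [S1 Sc] := HSf i Hi2.
    rewrite (_ : [set e | lab e == (i, 1%N)] = [set e | (cls e == i) && ~~ part1 e]); last first.
      apply/setP => e; rewrite !inE /lab; case: (ltnP j (cls e)) => h.
        by case: (part1 e); rewrite xpair_eqE ?andbT ?andbF.
      rewrite (_ : (cls e == i) = false) /=; last by apply/eqP; lia.
      by repeat case: ifP => _; rewrite xpair_eqE; apply/negbTE/negP => /andP [/eqP ? _]; lia.
    have PE : forall b, (lbY b == (i, 1%N)) = (b \in [set b | grp b == i] :\: Sf i).
      move=> b; rewrite !inE /lbY /H; case: (ltnP j (grp b)) => h.
        case: (boolP (b \in Sf (grp b))) => hb; rewrite xpair_eqE ?andbT ?andbF /=.
          by case: eqP => [E|]; rewrite ?andbF // -E hb.
        by case: eqP => [E|]; rewrite ?andbF // -E (negPf hb).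
      rewrite (_ : (grp b == i) = false) ?andbF; last by apply/eqP; lia.
      by repeat case: ifP => _; rewrite xpair_eqE; apply/negbTE/negP => /andP [/eqP ? _]; lia.
    rewrite Cp2 // (eq_bigl _ _ PE) (eq_bigr (fun _ => 2%N)); last first.
      move=> b; rewrite !inE => /andP [bS /eqP gb].
      rewrite /cnt /H gb (negPf bS) (_ : (j < i)%N = true) //; lia.
    rewrite sum_nat_const cardsD (setIidPr S1) Sc Gc; last by lia.
    have [E1 E2] := @nn_half k i (ltnW k2) (proj1 (andP Hi2)).
    rewrite E2 E1; lia.
  + rewrite (_ : [set e | lab e == (1, 0)%N] = [set e | cls e == 1%N]); last first.
      apply/setP => e; rewrite !inE /lab J1; case: (ltnP 1 (cls e)) => h.
        rewrite xpair_eqE (_ : (cls e == 1%N) = false) //; by apply/eqP; lia.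
      by rewrite /= eqxx; apply/esym/eqP; have := c1 e; lia.
    rewrite C1 (eq_bigl (fun b => b \in [set b | grp b == 1%N])); last first.
      move=> b; rewrite !inE /lbY J1; case: (ltnP 1 (grp b)) => h.
        rewrite xpair_eqE (_ : (grp b == 1%N) = false) //; by apply/eqP; lia.
      by rewrite /= eqxx; apply/esym/eqP; have := g1 b; lia.
    rewrite (eq_bigr (fun _ => 1%N)); last first.
      by move=> b; rewrite inE /cnt J1 => /eqP ->.
    by rewrite sum1_card Gc // ?/nn ?muln0 //; lia.
  + have j2 : (2 <= j <= k)%N by move: J1 jk; case: eqP => //; lia.
    rewrite (_ : [set e | lab e == (j, 0)%N] =
                 [set e | (cls e < j)%N] :|: [set e in T | cls e == j]); last first.
      apply/setP => e; rewrite !inE /lab; case: (ltnP j (cls e)) => h.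
        have ne : (cls e == j) = false by apply/eqP; lia.
        by rewrite xpair_eqE ne /= andbF orbF ltnNge ltnW.
      rewrite (negPf J1); case: (ltnP (cls e) j) => h2 /=; first by rewrite eqxx.
      rewrite (_ : cls e == j) ?andbT; last by apply/eqP; lia.
      case: (boolP (e \in T)) => eT.
        have p1 : part1 e by move: (subsetP Tsub e eT); rewrite inE => /andP [].
        by rewrite p1 /=; apply/eqP.
      rewrite andbF; case: (part1 e); rewrite xpair_eqE ?eqxx ?andbT /=;
        by apply/negbTE/eqP; lia.
    rewrite cardsU (_ : _ :&: _ = set0) ?cards0 ?subn0; last first.
      by apply/setP => e; rewrite !inE; case: ltnP => //= h; apply/negbTE/negP => /andP [_ /eqP]; lia.
    rewrite Tc // card_cls //.
    rewrite (@eq_big_nat _ _ _ 1 j _ (fun i => mm k i)); last first.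
      move=> i Hi; case: (eqVneq i 1%N) => [->|i1]; first by rewrite C1.
      rewrite /mm (negPf i1).
      have Hi2 : (2 <= i <= k)%N by lia.
      rewrite (_ : [set e | cls e == i] = [set e | (cls e == i) && part1 e] :|:
                   [set e | (cls e == i) && ~~ part1 e]); last first.
        by apply/setP => e; rewrite !inE; case: (part1 e); rewrite ?andbT ?andbF ?orbF.
      rewrite cardsU (_ : _ :&: _ = set0) ?cards0 ?subn0; last first.
        by apply/setP => e; rewrite !inE; case: (part1 e); rewrite ?andbF ?andbT.
      have [E1 E2] := @nn_half k i (ltnW k2) (proj1 (andP Hi2)).
      rewrite Cp1 // Cp2 // E2 E1; lia.
    have j2' : (2 <= j)%N by case/andP: j2.
    rewrite subnKC; last exact/ltnW/Sbound.
    have PE : forall b, (lbY b == (j, 0%N)) = (grp b < j)%N.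
      move=> b; rewrite /lbY; case: (ltnP j (grp b)) => h.
        rewrite xpair_eqE (_ : (grp b == j) = false) /=; last by apply/eqP; lia.
        by apply/esym/negbTE; rewrite -leqNgt ltnW.
      rewrite (negPf J1); case: (ltnP (grp b) j) => h2 /=; first by apply/eqP.
      by rewrite xpair_eqE /= andbF.
    rewrite (eq_bigl _ _ PE) (eq_bigr (fun b => cc k j (grp b))); last first.
      move=> b h; rewrite /cnt ltnNge ltnW // (_ : (grp b == j) = false) //.
      by apply/eqP; lia.
    have wj : 2 * wt R k j != 0 by rewrite mulf_neq0 // gt_eqF // wt_pos.
    apply/eqP; rewrite -(eqr_nat R); apply/eqP; apply: (mulIf wj).
    rewrite natr_sum mulr_suml (eq_bigr (fun b => wt R k (grp b))); last first.
      by move=> b h; apply: W1.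
    rewrite (@sum_grp R N grp (fun i => wt R k i) j g1).
    rewrite (@eq_big_nat _ _ _ 1 j _ (fun i => (nn k i)%:R * wt R k i)); last first.
      by move=> i Hi; rewrite Gc ?mulr_natl //; lia.
    rewrite SumW //.
    have [E1 E2] := @nn_half k j (ltnW k2) j2'.
    rewrite E2 mulrA -natrM mulnC -E1 mulrC wt_nn //.
  + have j2 : (2 <= j <= k)%N by move: J1 jk; case: eqP => //; lia.
    rewrite (_ : [set e | lab e == (j, 1)%N] = [set e | (cls e == j) && ~~ part1 e]); last first.
      apply/setP => e; rewrite !inE /lab; case: (ltnP j (cls e)) => h.
        have ne : (cls e == j) = false by apply/eqP; lia.
        by rewrite xpair_eqE ne.
      rewrite (negPf J1); case: (ltnP (cls e) j) => h2 /=.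
        by rewrite xpair_eqE /= (_ : (cls e == j) = false) //; apply/eqP; lia.
      rewrite (_ : cls e == j) /=; last by apply/eqP; lia.
      by case: (part1 e); case: (e \in T); rewrite /= ?xpair_eqE ?eqxx //=; apply/eqP; lia.
    rewrite Cp2 // (eq_bigl (fun b => b \in [set b | grp b == j])); last first.
      move=> b; rewrite !inE /lbY; case: (ltnP j (grp b)) => h.
        rewrite xpair_eqE (_ : (grp b == j) = false) //; by apply/eqP; lia.
      rewrite (negPf J1); case: (ltnP (grp b) j) => h2 /=.
        by rewrite xpair_eqE /= andbF (_ : (grp b == j) = false) //; apply/eqP; lia.
      by rewrite (_ : grp b == j); [apply/eqP | apply/eqP; lia].
    rewrite (eq_bigr (fun _ => 1%N)); last first.
      by move=> b; rewrite inE /cnt => /eqP ->; rewrite ltnn eqxx.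
    by rewrite sum1_card Gc.
- move=> b; rewrite /lbY /=; have := g1 b.
  case: ifP => _; [|case: ifP => _; [|case: ifP => _]];
   by move=> gb; apply/negP; rewrite xpair_eqE => /andP [/eqP E _]; lia.
- move=> e; rewrite /cost /lab /cl -/j /=.
  have j0 : (j == 0%N) = false by apply/eqP; lia.
  case: (ltnP j (cls e)) => H1 /=.
    rewrite (_ : (cls e == 0%N) = false) ?H1; last by apply/eqP; lia.
    by case: (part1 e).
  case: (eqVneq j 1%N) => J1 /=; first by rewrite J1.
  case: (ltnP (cls e) j) => H2 /=; first by rewrite j0 ltnn.
  by case: (part1 e); case: (e \in T); rewrite /= ?j0 ?ltnn.
- by [].
- move=> b; rewrite /cnt /lbY /cl /=.
  have j0 : (j == 0%N) = false by apply/eqP; lia.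
  case: (ltnP j (grp b)) => H1 /=.
    rewrite (_ : (grp b == 0%N) = false) ?H1; last by apply/eqP; lia.
    case: (H b) => /=; first by rewrite mul1r.
    by rewrite mulr_natl mulr2n -splitr.
  case: (eqVneq j 1%N) => J1 /=.
    have Eb : grp b = 1%N by have := g1 b; lia.
    by rewrite J1 Eb eqxx /= mul1r /wt.
  case: (ltnP (grp b) j) => H2 /=; rewrite j0 ltnn /=.
    rewrite (_ : (grp b == j) = false); last by apply/eqP; lia.
    by apply: W1.
  have Eb : grp b = j by lia.
  by rewrite Eb eqxx mul1r.
Qed.
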